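(* Let $I\subseteq\mathbb{R}$ be an interval, let $f:I\to\mathbb{R}$ be differentiable on the interior $I^{\circ}$, let $a,b\in I^{\circ}$ with $a<b$, assume $f'\in L[a,b]$, and let $\alpha,\lambda\in[0,1]$. Suppose that $|f'|$ is $s$-convex on $[a,b]$ for some fixed $s\in(0,1]$. Define $$I_f(\lambda,\alpha,a,b)=\lambda\big(\alpha f(a)+(1-\alpha)f(b)\big)+(1-\lambda)f(\alpha a+(1-\alpha)b)-\frac{1}{b-a}\int_a^b f(x)\,dx,$$ $$c_1(\alpha,\lambda,s)=(\alpha\lambda)^{s+2}\frac{2}{(s+1)(s+2)}-\alpha\lambda\frac{(1-\alpha)^{s+1}}{s+1}+\frac{(1-\alpha)^{s+2}}{s+2},$$ $$c_2(\alpha,\lambda,s)=(1-\alpha\lambda)^{s+2}\frac{2}{(s+1)(s+2)}-\frac{(1-\alpha\lambda)(1+\alpha^{s+1})}{s+1}+\frac{1+\alpha^{s+2}}{s+2},$$ $$c_3(\alpha,\lambda,s)=\alpha\lambda\frac{(1-\alpha)^{s+1}}{s+1}-\frac{(1-\alpha)^{s+2}}{s+2},\qquad c_4(\alpha,\lambda,s)=\frac{(\alpha\lambda-1)(1-\alpha^{s+1})}{s+1}+\frac{1-\alpha^{s+2}}{s+2}.$$ Then: (i) if $\alpha\lambda\leq 1-\alpha\leq 1-\lambda(1-\alpha)$, $$|I_f(\lambda,\alpha,a,b)|\leq (b-a)\Big[\big(c_1(\alpha,\lambda,s)+c_2(1-\alpha,\lambda,s)\big)|f'(b)|+\big(c_2(\alpha,\lambda,s)+c_1(1-\alpha,\lambda,s)\big)|f'(a)|\Big];$$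 (ii) if $\alpha\lambda\leq 1-\lambda(1-\alpha)\leq 1-\alpha$, $$|I_f(\lambda,\alpha,a,b)|\leq (b-a)\Big[\big(c_1(\alpha,\lambda,s)+c_4(1-\alpha,\lambda,s)\big)|f'(b)|+\big(c_2(\alpha,\lambda,s)+c_3(1-\alpha,\lambda,s)\big)|f'(a)|\Big];$$ (iii) if $1-\alpha\leq\alpha\lambda\leq 1-\lambda(1-\alpha)$, $$|I_f(\lambda,\alpha,a,b)|\leq (b-a)\Big[\big(c_3(\alpha,\lambda,s)+c_2(1-\alpha,\lambda,s)\big)|f'(b)|+\big(c_4(\alpha,\lambda,s)+c_1(1-\alpha,\lambda,s)\big)|f'(a)|\Big].$$
   Context: For a fixed $s\in(0,1]$, a function $g:[a,b]\to[0,\infty)$ is called $s$-convex (in the second sense) on $[a,b]$ if $g(\theta x+(1-\theta)y)\leq \theta^{s}g(x)+(1-\theta)^{s}g(y)$ for all $x,y\in[a,b]$ and all $\theta\in[0,1]$. *)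

(* Defs.v *)
From mathcomp Require Import all_boot all_order all_algebra.
From mathcomp Require Import all_classical all_reals all_analysis.
Set Implicit Arguments. Unset Strict Implicit. Unset Printing Implicit Defensive.
Import Order.TTheory GRing.Theory Num.Theory.
Import numFieldNormedType.Exports.
Local Open Scope classical_set_scope.
Local Open Scope ring_scope.

Definition s_convex (R : realType) (s a b : R) (g : R -> R) : Prop :=
  (forall x, a <= x <= b -> 0 <= g x) /\
  (forall x y t, a <= x <= b -> a <= y <= b -> 0 <= t <= 1 ->
     g (t * x + (1 - t) * y) <= t `^ s * g x + (1 - t) `^ s * g y).

Definition I_f (R : realType) (f : R -> R) (lam alpha a b : R) : R :=
  lam * (alpha * f a + (1 - alpha) * f b) + (1 - lam) * f (alpha * a + (1 - alpha) * b)
  - (b - a)^-1 * (\int[lebesgue_measure]_(x in `[a, b]) f x).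

Definition c1 (R : realType) (alpha lam s : R) : R :=
  (alpha * lam) `^ (s + 2) * (2 / ((s + 1) * (s + 2)))
  - alpha * lam * ((1 - alpha) `^ (s + 1) / (s + 1))
  + (1 - alpha) `^ (s + 2) / (s + 2).

Definition c2 (R : realType) (alpha lam s : R) : R :=
  (1 - alpha * lam) `^ (s + 2) * (2 / ((s + 1) * (s + 2)))
  - (1 - alpha * lam) * (1 + alpha `^ (s + 1)) / (s + 1)
  + (1 + alpha `^ (s + 2)) / (s + 2).

Definition c3 (R : realType) (alpha lam s : R) : R :=
  alpha * lam * ((1 - alpha) `^ (s + 1) / (s + 1))
  - (1 - alpha) `^ (s + 2) / (s + 2).

Definition c4 (R : realType) (alpha lam s : R) : R :=
  (alpha * lam - 1) * (1 - alpha `^ (s + 1)) / (s + 1)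
  + (1 - alpha `^ (s + 2)) / (s + 2).

(* Main.v *)
Require Import Defs.
From mathcomp Require Import all_boot all_order all_algebra.
From mathcomp Require Import all_classical all_reals all_analysis.
From mathcomp Require Import lra ring.
Import Order.TTheory GRing.Theory Num.Theory.
Import numFieldNormedType.Exports.
Local Open Scope classical_set_scope.
Local Open Scope ring_scope.

Section H.
Context {R : realType}.

Lemma is_derive_comp1 (f g : R -> R) (x df dg : R) :
  is_derive x 1 f df -> is_derive (f x) 1 g dg -> is_derive x 1 (g \o f) (dg * df).
Proof.
move=> hf hg.
have d1 : derivable f x 1 by case: hf.
have d2 : derivable g (f x) 1 by case: hg.
apply: DeriveDef.
  apply/derivable1_diffP; apply: differentiable_comp; exact/derivable1_diffP.
rewrite -derive1E derive1_comp // !derive1E.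
by rewrite (@derive_val _ _ _ _ _ _ _ hf) (@derive_val _ _ _ _ _ _ _ hg).
Qed.

Lemma pwc_cont r : 0 < r -> continuous (fun t : R => `|t| `^ r).
Proof.
move=> r0 x; have [->|x0] := eqVneq x 0.
  rewrite /continuous_at normr0 powR0 ?gt_eqF//; apply/cvgrPdist_lt => e e0.
  have d0 : 0 < e `^ r^-1 by apply: powR_gt0.
  near=> t; rewrite sub0r normrN ger0_norm ?powR_ge0//.
  have : `|t| < e `^ r^-1.
    near: t; exists (e `^ r^-1) => // y /=.
    by rewrite sub0r normrN.
  move=> ht.
  have -> : e = (e `^ r^-1) `^ r.
    by rewrite -powRrM mulVf ?gt_eqF// powRr1 // ltW.
  by rewrite gt0_ltr_powR// ?nnegrE ?normr_ge0 ?powR_ge0.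
rewrite /continuous_at.
have -> : (fun t : R => `|t| `^ r) = (fun t => t `^ r) \o (fun t : R => `|t|) by [].
apply: cvg_comp.
  exact: (cvg_norm (@cvg_id _ _)).
have := (@differentiable_continuous _ R^o R^o `|x| (fun t => t `^ r)).
apply. apply/derivable1_diffP.
by apply: derivable_powR; rewrite in_itv/= andbT normr_gt0.
Unshelve. all: by end_near. Qed.


Lemma mvt_ge0 (H dH : R -> R) (u v : R) : u <= v ->
  (forall x : R, u < x < v -> is_derive x 1 H (dH x)) ->
  (forall x, u < x < v -> 0 <= dH x) ->
  {within `[u, v], continuous H} -> H u <= H v.
Proof.
move=> uv hd hp hc; case: (ltgtP u v) uv => // [ltuv _|-> _]; last by [].
have [c cin eq] := MVT ltuv (fun x (xin : x \in `]u, v[) => hd x (ltac:(by move: xin; rewrite in_itv))) hc.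
rewrite -subr_ge0 eq; apply: mulr_ge0; first by apply: hp; move: cin; rewrite in_itv.
by rewrite subr_ge0 ltW.
Qed.

Lemma piece (F P dF dP : R -> R) (u v : R) :
  u <= v ->
  (forall x : R, u < x < v -> is_derive x 1 F (dF x)) ->
  (forall x : R, u < x < v -> is_derive x 1 P (dP x)) ->
  (forall x, u < x < v -> `|dF x| <= dP x) ->
  {within `[u, v], continuous F} -> {within `[u, v], continuous P} ->
  `|F v - F u| <= P v - P u.
Proof.
move=> uv dF' dP' le cF cP.
have h1 : (P - F) u <= (P - F) v.
  apply: (@mvt_ge0 _ (fun x => dP x - dF x)) => //.
  - by move=> x hx; apply: is_deriveB; [exact: dP'|exact: dF'].
  - by move=> x hx; rewrite subr_ge0 (le_trans (ler_norm _)) ?le//.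
  - exact: within_continuousB.
have h2 : (P + F) u <= (P + F) v.
  apply: (@mvt_ge0 _ (fun x => dP x + dF x)) => //.
  - by move=> x hx; apply: is_deriveD; [exact: dP'|exact: dF'].
  - move=> x hx; rewrite -lerBlDr sub0r (le_trans _ (le _ hx))//.
    by rewrite -normrN ler_norm.
  - exact: within_continuousD.
move: h1 h2; rewrite !fctE => h1 h2.
rewrite ler_norml; apply/andP; split; lra.
Qed.


Definition pw (r t : R) := `|t| `^ r.
Definition Qf (s p t : R) := pw (s + 2) t / (s + 2) - p * pw (s + 1) t / (s + 1).

Lemma powS (t r : R) : 0 <= t -> 0 <= r -> t `^ (r + 1) = t * t `^ r.
Proof.
move=> t0 r0; rewrite powRD ?powRr1 1?mulrC//.
by rewrite gt_eqF //; lra.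
Qed.

Lemma Qf_derive (s p t : R) : 0 < s -> 0 < t ->
  is_derive t 1 (Qf s p) ((t - p) * t `^ s).
Proof.
move=> s0 t0.
apply: (@near_eq_is_derive _ _ _ (fun y => y `^ (s + 2) / (s + 2) - p * y `^ (s + 1) / (s + 1))).
  near=> y; rewrite /Qf /pw ger0_norm// ltW//; near: y.
  exact: lt_nbhsr.
have h1 : is_derive t 1 (fun y : R => y `^ (s + 2)) ((s + 2) * t `^ (s + 2 - 1)).
  exact: is_derive1_powR.
have h2 : is_derive t 1 (fun y : R => y `^ (s + 1)) ((s + 1) * t `^ (s + 1 - 1)).
  exact: is_derive1_powR.
have h3 := is_deriveZ (s + 2)^-1 h1.
have h4 := is_deriveZ (p / (s + 1)) h2.
have h5 := is_deriveB h3 h4.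
move: h5; set g := (X in is_derive _ _ X _ -> _) => h5.
have -> : (fun y : R => y `^ (s + 2) / (s + 2) - p * y `^ (s + 1) / (s + 1)) = g.
  by apply/funext => y; rewrite /g !fctE /= /GRing.scale /=; ring.
apply: (is_derive_eq h5).
rewrite /GRing.scale /= (_ : s + 2 - 1 = s + 1); last by ring.
rewrite (_ : s + 1 - 1 = s); last by ring.
rewrite powS ?ltW//.
have ? : s + 2 != 0 by rewrite gt_eqF//; lra.
have ? : s + 1 != 0 by rewrite gt_eqF//; lra.
by rewrite mulKf// mulrA divfK// mulrBl.
Unshelve. all: by end_near. Qed.


Lemma affine_derive (k c x : R) : is_derive x 1 (fun z : R => k * z + c) k.
Proof.
have h := is_deriveD (is_deriveZ k (@is_derive_id _ _ x 1)) (@is_derive_cst _ _ _ c x 1).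
have -> : (fun z : R => k * z + c) = (k \*: id + cst c) by apply/funext.
by apply: (is_derive_eq h); rewrite /GRing.scale/= mulr1 addr0.
Qed.

Lemma Qaff_derive (s p k c x : R) : 0 < s -> 0 < k * x + c ->
  is_derive x 1 (fun z => Qf s p (k * z + c)) (((k * x + c) - p) * (k * x + c) `^ s * k).
Proof.
move=> s0 h.
exact: (is_derive_comp1 _ _ _ _ _ (affine_derive k c x) (Qf_derive s p _ s0 h)).
Qed.

Lemma Qf_cont (s p : R) : 0 < s -> continuous (Qf s p).
Proof.
move=> s0 x.
have c2 : {for x, continuous (pw (s + 2))} by apply: pwc_cont; lra.
have c1 : {for x, continuous (pw (s + 1))} by apply: pwc_cont; lra.
rewrite /continuous_at /Qf.
apply: cvgB; first by apply: cvgMl; exact: c2.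
apply: cvgMl; apply: cvgMr; exact: c1.
Qed.


Lemma is_derive_lin (f g : R -> R) (al be ga x df dg : R) :
  is_derive x 1 f df -> is_derive x 1 g dg ->
  is_derive x 1 (fun y => ga * (al * f y + be * g y)) (ga * (al * df + be * dg)).
Proof.
move=> hf hg.
have h := is_deriveZ ga (is_deriveD (is_deriveZ al hf) (is_deriveZ be hg)).
have -> : (fun y => ga * (al * f y + be * g y)) = ga \*: (al \*: f + be \*: g) by apply/funext.
exact: (is_derive_eq h).
Qed.

Lemma Qaff_cont (s p k c : R) : 0 < s -> continuous (fun z => Qf s p (k * z + c)).
Proof.
move=> s0 x; rewrite /continuous_at.
apply: (@cvg_comp _ _ _ (fun z => k * z + c) (Qf s p)); last exact: Qf_cont.
apply: cvgD; last exact: cvg_cst.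
apply: cvgMr; exact: cvg_id.
Qed.

Definition Tz (a b z : R) := (b - z) / (b - a).
Definition Pw (a b A B s w z : R) :=
  (b - a) ^+ 2 * (A * Qf s (Tz a b w) (Tz a b z) + B * Qf s (1 - Tz a b w) (1 - Tz a b z)).

Lemma Pw_derive (a b A B s w z : R) : a < b -> a < z < b -> 0 < s ->
  is_derive z 1 (Pw a b A B s w)
    ((z - w) * (A * Tz a b z `^ s + B * (1 - Tz a b z) `^ s)).
Proof.
move=> ab /andP[az zb] s0.
have D0 : b - a != 0 by rewrite gt_eqF// subr_gt0.
set k1 := - (b - a)^-1; set c1 := b / (b - a).
set k2 := (b - a)^-1; set c2 := 1 - b / (b - a).
have e1 y : Tz a b y = k1 * y + c1 by rewrite /Tz /k1 /c1; field.
have e2 y : 1 - Tz a b y = k2 * y + c2 by rewrite /Tz /k2 /c2; field.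
have -> : Pw a b A B s w = fun y => (b - a) ^+ 2 * (A * Qf s (Tz a b w) (k1 * y + c1)
     + B * Qf s (1 - Tz a b w) (k2 * y + c2)).
  by apply/funext => y; rewrite /Pw -e1 -e2.
have T0 : 0 < Tz a b z by rewrite /Tz divr_gt0// subr_gt0.
have T1 : 0 < 1 - Tz a b z.
  by rewrite /Tz subr_gt0 ltr_pdivrMr ?subr_gt0// mul1r; lra.
have h := is_derive_lin _ _ A B ((b - a) ^+ 2) _ _ _
  (Qaff_derive s (Tz a b w) k1 c1 z s0 (ltac:(by rewrite -e1)))
  (Qaff_derive s (1 - Tz a b w) k2 c2 z s0 (ltac:(by rewrite -e2))).
apply: (is_derive_eq h).
rewrite -e1 -e2.
set X := Tz a b z `^ s; set Y := (1 - Tz a b z) `^ s.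
rewrite /Tz /k1 /k2; field.
by [].
Qed.


Lemma Pw_cont (a b A B s w : R) : a < b -> 0 < s -> continuous (Pw a b A B s w).
Proof.
move=> ab s0.
have D0 : b - a != 0 by rewrite gt_eqF// subr_gt0.
set k1 := - (b - a)^-1; set c1 := b / (b - a).
set k2 := (b - a)^-1; set c2 := 1 - b / (b - a).
have e1 y : Tz a b y = k1 * y + c1 by rewrite /Tz /k1 /c1; field.
have e2 y : 1 - Tz a b y = k2 * y + c2 by rewrite /Tz /k2 /c2; field.
have -> : Pw a b A B s w = fun y => (b - a) ^+ 2 * (A * Qf s (Tz a b w) (k1 * y + c1)
     + B * Qf s (1 - Tz a b w) (k2 * y + c2)).
  by apply/funext => y; rewrite /Pw -e1 -e2.
move=> x; rewrite /continuous_at.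
apply: cvgMr; apply: cvgD; apply: cvgMr; exact: Qaff_cont.
Qed.

Lemma powS2 (t s : R) : 0 <= t -> 0 <= s -> t `^ (s + 2) = t * t `^ (s + 1).
Proof. by move=> t0 s0; rewrite -powS// ?addrA//; lra. Qed.

Lemma Qf_ge0 (s p t : R) : 0 <= t -> 0 <= s ->
  Qf s p t = t * t `^ (s + 1) / (s + 2) - p * t `^ (s + 1) / (s + 1).
Proof. by move=> t0 s0; rewrite /Qf /pw ger0_norm// powS2. Qed.

Lemma alg_i (a b A B s alpha lam : R) : a < b -> 0 < s -> 0 <= alpha <= 1 -> 0 <= lam <= 1 ->
  let D := b - a in
  let c := alpha * a + (1 - alpha) * b in
  let u1 := a + lam * alpha * D in
  let u2 := b - lam * (1 - alpha) * D in
  (Pw a b A B s u1 a - Pw a b A B s u1 u1) + (Pw a b A B s u1 c - Pw a b A B s u1 u1)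
  + ((Pw a b A B s u2 c - Pw a b A B s u2 u2) + (Pw a b A B s u2 b - Pw a b A B s u2 u2))
  = D * (D * ((c1 alpha lam s + c2 (1 - alpha) lam s) * B
              + (c2 alpha lam s + c1 (1 - alpha) lam s) * A)).
Proof.
move=> ab s0 /andP[al0 al1] /andP[l0 l1] D c u1 u2.
have D0 : D != 0 by rewrite gt_eqF// subr_gt0.
have Ta : Tz a b a = 1 by rewrite /Tz divff.
have Tb : Tz a b b = 0 by rewrite /Tz subrr mul0r.
have Tc : Tz a b c = alpha by rewrite /Tz /c; field.
have Tu1 : Tz a b u1 = 1 - alpha * lam by rewrite /Tz /u1 /D; field.
have Tu2 : Tz a b u2 = (1 - alpha) * lam by rewrite /Tz /u2 /D; field.
have e1 : 1 - (1 - alpha * lam) = alpha * lam by ring.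
have e2 : 1 - (1 - alpha) = alpha by ring.
have s0' : 0 <= s by rewrite ltW.
have n1 : 0 <= alpha * lam by rewrite mulr_ge0.
have n2 : 0 <= 1 - alpha by rewrite subr_ge0.
have n3 : 0 <= 1 - alpha * lam by rewrite subr_ge0; nra.
have n4 : 0 <= (1 - alpha) * lam by rewrite mulr_ge0.
have n5 : 0 <= 1 - (1 - alpha) * lam by rewrite subr_ge0; nra.
have n6 : (0:R) <= 1 by [].
have n7 : (0:R) <= 0 by [].
have sp1 : s + 1 != 0 by rewrite gt_eqF//; lra.
have sp2 : s + 2 != 0 by rewrite gt_eqF//; lra.
rewrite /Pw Ta Tb Tc Tu1 Tu2 subrr subr0 e1 !Qf_ge0 //.
rewrite /c1 /c2 e2 !powS2 // powR1 powR0 //.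
by rewrite /D; field; rewrite sp1 sp2.
Qed.
Lemma alg_ii (a b A B s alpha lam : R) : a < b -> 0 < s -> 0 <= alpha <= 1 -> 0 <= lam <= 1 ->
  let D := b - a in
  let c := alpha * a + (1 - alpha) * b in
  let u1 := a + lam * alpha * D in
  let u2 := b - lam * (1 - alpha) * D in
  (Pw a b A B s u1 a - Pw a b A B s u1 u1) + (Pw a b A B s u1 c - Pw a b A B s u1 u1)
  + (Pw a b A B s u2 b - Pw a b A B s u2 c)
  = D * (D * ((c1 alpha lam s + c4 (1 - alpha) lam s) * B
              + (c2 alpha lam s + c3 (1 - alpha) lam s) * A)).
Proof.
move=> ab s0 /andP[al0 al1] /andP[l0 l1] D c u1 u2.
have D0 : D != 0 by rewrite gt_eqF// subr_gt0.
have Ta : Tz a b a = 1 by rewrite /Tz divff.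
have Tb : Tz a b b = 0 by rewrite /Tz subrr mul0r.
have Tc : Tz a b c = alpha by rewrite /Tz /c; field.
have Tu1 : Tz a b u1 = 1 - alpha * lam by rewrite /Tz /u1 /D; field.
have Tu2 : Tz a b u2 = (1 - alpha) * lam by rewrite /Tz /u2 /D; field.
have e1 : 1 - (1 - alpha * lam) = alpha * lam by ring.
have e2 : 1 - (1 - alpha) = alpha by ring.
have s0' : 0 <= s by rewrite ltW.
have n1 : 0 <= alpha * lam by rewrite mulr_ge0.
have n2 : 0 <= 1 - alpha by rewrite subr_ge0.
have n3 : 0 <= 1 - alpha * lam by rewrite subr_ge0; nra.
have n4 : 0 <= (1 - alpha) * lam by rewrite mulr_ge0.
have n5 : 0 <= 1 - (1 - alpha) * lam by rewrite subr_ge0; nra.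
have n6 : (0:R) <= 1 by [].
have n7 : (0:R) <= 0 by [].
have sp1 : s + 1 != 0 by rewrite gt_eqF//; lra.
have sp2 : s + 2 != 0 by rewrite gt_eqF//; lra.
rewrite /Pw Ta Tb Tc Tu1 Tu2 subrr subr0 e1 !Qf_ge0 //.
rewrite /c1 /c2 /c3 /c4 e2 !powS2 // powR1 powR0 //.
by rewrite /D; field; rewrite sp1 sp2.
Qed.
Lemma alg_iii (a b A B s alpha lam : R) : a < b -> 0 < s -> 0 <= alpha <= 1 -> 0 <= lam <= 1 ->
  let D := b - a in
  let c := alpha * a + (1 - alpha) * b in
  let u1 := a + lam * alpha * D in
  let u2 := b - lam * (1 - alpha) * D in
  (Pw a b A B s u1 a - Pw a b A B s u1 c)
  + ((Pw a b A B s u2 c - Pw a b A B s u2 u2) + (Pw a b A B s u2 b - Pw a b A B s u2 u2))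
  = D * (D * ((c3 alpha lam s + c2 (1 - alpha) lam s) * B
              + (c4 alpha lam s + c1 (1 - alpha) lam s) * A)).
Proof.
move=> ab s0 /andP[al0 al1] /andP[l0 l1] D c u1 u2.
have D0 : D != 0 by rewrite gt_eqF// subr_gt0.
have Ta : Tz a b a = 1 by rewrite /Tz divff.
have Tb : Tz a b b = 0 by rewrite /Tz subrr mul0r.
have Tc : Tz a b c = alpha by rewrite /Tz /c; field.
have Tu1 : Tz a b u1 = 1 - alpha * lam by rewrite /Tz /u1 /D; field.
have Tu2 : Tz a b u2 = (1 - alpha) * lam by rewrite /Tz /u2 /D; field.
have e1 : 1 - (1 - alpha * lam) = alpha * lam by ring.
have e2 : 1 - (1 - alpha) = alpha by ring.
have s0' : 0 <= s by rewrite ltW.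
have n1 : 0 <= alpha * lam by rewrite mulr_ge0.
have n2 : 0 <= 1 - alpha by rewrite subr_ge0.
have n3 : 0 <= 1 - alpha * lam by rewrite subr_ge0; nra.
have n4 : 0 <= (1 - alpha) * lam by rewrite mulr_ge0.
have n5 : 0 <= 1 - (1 - alpha) * lam by rewrite subr_ge0; nra.
have n6 : (0:R) <= 1 by [].
have n7 : (0:R) <= 0 by [].
have sp1 : s + 1 != 0 by rewrite gt_eqF//; lra.
have sp2 : s + 2 != 0 by rewrite gt_eqF//; lra.
rewrite /Pw Ta Tb Tc Tu1 Tu2 subrr subr0 e1 !Qf_ge0 //.
rewrite /c1 /c2 /c3 /c4 e2 !powS2 // powR1 powR0 //.
by rewrite /D; field; rewrite sp1 sp2.
Qed.
End H.

Section M.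
Context {R : realType} (I : set R) (f : R -> R) (a b s : R).
Hypothesis hI : is_interval I.
Hypothesis hd : forall x, interior I x -> derivable f x 1.
Hypothesis ha : interior I a.
Hypothesis hb : interior I b.
Hypothesis ab : a < b.
Hypothesis s0 : 0 < s.
Hypothesis hs : s_convex s a b (fun x => `|derive1 f x|).

Let A := `|derive1 f a|.
Let B := `|derive1 f b|.

Lemma in_int z : a <= z <= b -> interior I z.
Proof.
case/andP => az zb.
case: (ltgtP a z) az => // [az _|<-]; last by [].
case: (ltgtP z b) zb => // [zb' _|->]; last by [].
rewrite /interior; apply: (@filterS _ _ _ [set` `]a, b[]).
  move=> y /=; rewrite in_itv/= => /andP[ay yb].
  by apply: (hI _ _ (interior_subset ha) (interior_subset hb)); rewrite !ltW.
apply: open_nbhs_nbhs; split; first exact: interval_open.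
by rewrite /= in_itv/= az zb'.
Qed.

Lemma dfz z : a <= z <= b -> is_derive z 1 f (derive1 f z).
Proof. by move=> hz; rewrite derive1E; apply: derivableP; apply: hd; exact: in_int. Qed.

Lemma cfz z : a <= z <= b -> {for z, continuous f}.
Proof.
move=> hz; have := hd _ (in_int _ hz) => /derivable1_diffP.
exact: differentiable_continuous.
Qed.

Lemma intf : lebesgue_measure.-integrable `[a, b] (EFin \o f).
Proof.
apply: continuous_compact_integrable; first exact: segment_compact.
apply: continuous_in_subspaceT => z; rewrite inE /= in_itv/= => hz.
exact: cfz.
Qed.

Let G z := \int[lebesgue_measure]_(t in `[a, z]) f t.

Lemma dG z : a < z < b -> is_derive z 1 G (f z).
Proof.
case/andP => az zb.
have [h1 h2] := continuous_FTC1_closed zb intf az (cfz z (ltac:(by rewrite !ltW))).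
by rewrite -h2 derive1E; apply: derivableP.
Qed.

Lemma cG : {within `[a, b], continuous G}.
Proof. exact: (parameterized_integral_continuous (ltW ab) intf). Qed.

Definition Fw w z := (z - w) * f z - G z.


Lemma dF w z : a < z < b -> is_derive z 1 (Fw w) ((z - w) * derive1 f z).
Proof.
move=> hz.
have hz' : a <= z <= b by case/andP: hz => *; rewrite !ltW.
have h := is_deriveB (is_deriveM (affine_derive 1 (- w) z) (dfz z hz')) (dG z hz).
have -> : Fw w = ((fun y => 1 * y + - w) * f - G) by apply/funext => y; rewrite !fctE mul1r.
by apply: (is_derive_eq h); rewrite /GRing.scale /=; ring.
Qed.

Lemma cF w u v : a <= u -> v <= b -> {within `[u, v], continuous (Fw w)}.
Proof.
move=> au vb.
have -> : Fw w = ((fun y => (y - w) * f y) - G) by apply/funext.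
apply: within_continuousB.
  apply: continuous_in_subspaceT => z; rewrite inE /= in_itv/= => /andP[uz zv].
  rewrite /continuous_at; apply: cvgM; first by apply: cvgB; [exact: cvg_id|exact: cvg_cst].
  by apply: cfz; rewrite (le_trans au uz) (le_trans zv vb).
apply: (continuous_subspaceW _ cG).
by apply: subset_itv; rewrite bnd_simp.
Qed.

Lemma bnd z : a < z < b ->
  `|derive1 f z| <= A * Tz a b z `^ s + B * (1 - Tz a b z) `^ s.
Proof.
case/andP => az zb.
have D0 : b - a != 0 by rewrite gt_eqF// subr_gt0.
have T0 : 0 <= Tz a b z by rewrite /Tz divr_ge0// subr_ge0 ltW.
have T1 : Tz a b z <= 1.
  by rewrite /Tz ler_pdivrMr ?subr_gt0// mul1r; lra.
have := hs.2 a b (Tz a b z) (ltac:(by rewrite lexx ltW)) (ltac:(by rewrite lexx ltW))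
  (ltac:(by rewrite T0 T1)).
have -> : Tz a b z * a + (1 - Tz a b z) * b = z by rewrite /Tz; field.
by rewrite /A /B [_ * A]mulrC [_ * B]mulrC.
Qed.


Lemma pieceR w u v : a <= u -> u <= v -> v <= b -> w <= u ->
  `|Fw w v - Fw w u| <= Pw a b A B s w v - Pw a b A B s w u.
Proof.
move=> au uv vb wu.
apply: (@piece _ (Fw w) (Pw a b A B s w) (fun z => (z - w) * derive1 f z)
  (fun z => (z - w) * (A * Tz a b z `^ s + B * (1 - Tz a b z) `^ s)) u v uv).
- move=> x /andP[ux xv]; apply: dF; apply/andP; split.
  exact: (le_lt_trans au ux).
  exact: (lt_le_trans xv vb).
- move=> x /andP[ux xv]; apply: Pw_derive => //; apply/andP; split.
  exact: (le_lt_trans au ux).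
  exact: (lt_le_trans xv vb).
- move=> x /andP[ux xv].
  have wx : 0 <= x - w by rewrite subr_ge0 (le_trans wu) // ltW.
  rewrite normrM ger0_norm //.
  apply: ler_wpM2l => //.
  apply: bnd; apply/andP; split.
  exact: (le_lt_trans au ux).
  exact: (lt_le_trans xv vb).
- exact: cF.
- by apply: continuous_subspaceT; apply: Pw_cont.
Qed.

Lemma pieceL w u v : a <= u -> u <= v -> v <= b -> v <= w ->
  `|Fw w v - Fw w u| <= Pw a b A B s w u - Pw a b A B s w v.
Proof.
move=> au uv vb vw.
have := (@piece _ (Fw w) (- Pw a b A B s w) (fun z => (z - w) * derive1 f z)
  (fun z => - ((z - w) * (A * Tz a b z `^ s + B * (1 - Tz a b z) `^ s))) u v uv).
rewrite !fctE opprK [X in _ <= X]addrC; apply.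
- move=> x /andP[ux xv]; apply: dF; apply/andP; split.
  exact: (le_lt_trans au ux).
  exact: (lt_le_trans xv vb).
- move=> x /andP[ux xv]; apply: is_deriveN; apply: Pw_derive => //; apply/andP; split.
  exact: (le_lt_trans au ux).
  exact: (lt_le_trans xv vb).
- move=> x /andP[ux xv].
  have wx : x - w <= 0 by rewrite subr_le0 (le_trans _ vw) // ltW.
  rewrite normrM ler0_norm // -mulNr.
  apply: ler_wpM2l; first by rewrite oppr_ge0.
  apply: bnd; apply/andP; split.
  exact: (le_lt_trans au ux).
  exact: (lt_le_trans xv vb).
- exact: cF.
- apply: continuous_subspaceT => x; apply: cvgN; exact: Pw_cont.
Qed.


Lemma Ga : G a = 0.
Proof. by rewrite /G set_itv1 Rintegral_set1. Qed.

Lemma key_id (alpha lam : R) :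
  let D := b - a in
  let c := alpha * a + (1 - alpha) * b in
  let u1 := a + lam * alpha * D in
  let u2 := b - lam * (1 - alpha) * D in
  D * I_f f lam alpha a b = (Fw u1 c - Fw u1 a) + (Fw u2 b - Fw u2 c).
Proof.
move=> D c u1 u2.
have D0 : D != 0 by rewrite gt_eqF// subr_gt0.
rewrite /I_f /Fw Ga.
rewrite -/(G b) -/c.
rewrite /u1 /u2 /c /D.
field.
exact: D0.
Qed.

End M.

Theorem mainTheorem2 (R : realType) (I : set R) (f : R -> R) (a b alpha lam s : R) :
  is_interval I ->
  (forall x, interior I x -> derivable f x 1) ->
  interior I a -> interior I b -> a < b ->
  lebesgue_measure.-integrable `[a, b] (EFin \o derive1 f) ->
  0 <= alpha <= 1 -> 0 <= lam <= 1 ->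
  0 < s <= 1 ->
  s_convex s a b (fun x => `|derive1 f x|) ->
  [/\ (alpha * lam <= 1 - alpha <= 1 - lam * (1 - alpha) ->
        `|I_f f lam alpha a b| <= (b - a) *
          ((c1 alpha lam s + c2 (1 - alpha) lam s) * `|derive1 f b|
           + (c2 alpha lam s + c1 (1 - alpha) lam s) * `|derive1 f a|)),
      (alpha * lam <= 1 - lam * (1 - alpha) <= 1 - alpha ->
        `|I_f f lam alpha a b| <= (b - a) *
          ((c1 alpha lam s + c4 (1 - alpha) lam s) * `|derive1 f b|
           + (c2 alpha lam s + c3 (1 - alpha) lam s) * `|derive1 f a|))
    & (1 - alpha <= alpha * lam <= 1 - lam * (1 - alpha) ->
        `|I_f f lam alpha a b| <= (b - a) *
          ((c3 alpha lam s + c2 (1 - alpha) lam s) * `|derive1 f b|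
           + (c4 alpha lam s + c1 (1 - alpha) lam s) * `|derive1 f a|))].
Proof.
move=> hI hd ha hb ab _ hal hlam /andP[s0 _] hs.
pose D := b - a.
pose c := alpha * a + (1 - alpha) * b.
pose u1 := a + lam * alpha * D.
pose u2 := b - lam * (1 - alpha) * D.
have K : D * I_f f lam alpha a b = (Fw f a u1 c - Fw f a u1 a) + (Fw f a u2 b - Fw f a u2 c)
  := key_id f a b ab alpha lam.
have D0 : 0 < D by rewrite subr_gt0.
have fin : forall S X, `|D * I_f f lam alpha a b| <= S -> S = D * (D * X) ->
    `|I_f f lam alpha a b| <= D * X.
  move=> S X h e; move: h; rewrite e normrM gtr0_norm // ler_pM2l //.
have PR := pieceR I f a b s hI hd ha hb ab s0 hs.
have PL := pieceL I f a b s hI hd ha hb ab s0 hs.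
case/andP: hal => al0 al1; case/andP: hlam => l0 l1.
have au1 : a <= u1 by rewrite /u1 lerDl; apply: mulr_ge0 => //; [apply: mulr_ge0|apply: ltW].
have u2b : u2 <= b by rewrite /u2 lerBlDr lerDl; apply: mulr_ge0 => //; [apply: mulr_ge0; rewrite ?subr_ge0|apply: ltW].
have ac : a <= c by rewrite /c; nra.
have cb : c <= b by rewrite /c; nra.
have split1 : forall (F : R -> R) x y z, `|F z - F x| <= `|F y - F x| + `|F z - F y|.
  move=> F x y z; have -> : F z - F x = (F y - F x) + (F z - F y) by ring.
  exact: ler_normD.
split.
- case/andP => h1 h2.
  have u1c : u1 <= c.
    rewrite /u1 /c /D; have := mulr_ge0 (ltac:(by rewrite subr_ge0) : 0 <= 1 - alpha - alpha * lam) (ltW D0).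
    rewrite /D; nra.
  have cu2 : c <= u2.
    rewrite /u2 /c /D; have := mulr_ge0 (ltac:(by rewrite subr_ge0) : 0 <= 1 - lam * (1 - alpha) - (1 - alpha)) (ltW D0).
    rewrite /D; nra.
  apply: (fin _ _ _ (alg_i a b `|derive1 f a| `|derive1 f b| s alpha lam ab s0 (ltac:(by rewrite al0 al1)) (ltac:(by rewrite l0 l1)))).
  rewrite K; apply: (le_trans (ler_normD _ _)); apply: lerD.
    apply: (le_trans (split1 _ a u1 c)); apply: lerD.
      by apply: PL => //; apply: (le_trans u1c cb).
    by apply: PR.
  apply: (le_trans (split1 _ c u2 b)); apply: lerD.
    by apply: PL => //; apply: (le_trans cu2 u2b).
  by apply: PR => //; apply: (le_trans ac cu2).
- case/andP => h1 h2.
  have u1c : u1 <= c.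
    rewrite /u1 /c /D; have := mulr_ge0 (ltac:(by rewrite subr_ge0; apply: (le_trans h1 h2)) : 0 <= 1 - alpha - alpha * lam) (ltW D0).
    rewrite /D; nra.
  have u2c : u2 <= c.
    rewrite /u2 /c /D; have := mulr_ge0 (ltac:(by rewrite subr_ge0) : 0 <= (1 - alpha) - (1 - lam * (1 - alpha))) (ltW D0).
    rewrite /D; nra.
  apply: (fin _ _ _ (alg_ii a b `|derive1 f a| `|derive1 f b| s alpha lam ab s0 (ltac:(by rewrite al0 al1)) (ltac:(by rewrite l0 l1)))).
  rewrite K; apply: (le_trans (ler_normD _ _)); apply: lerD.
    apply: (le_trans (split1 _ a u1 c)); apply: lerD.
      by apply: PL => //; apply: (le_trans u1c cb).
    by apply: PR.
  by apply: PR.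
- case/andP => h1 h2.
  have cu1 : c <= u1.
    rewrite /u1 /c /D; have := mulr_ge0 (ltac:(by rewrite subr_ge0) : 0 <= alpha * lam - (1 - alpha)) (ltW D0).
    rewrite /D; nra.
  have cu2 : c <= u2.
    rewrite /u2 /c /D; have := mulr_ge0 (ltac:(by rewrite subr_ge0; apply: (le_trans h1 h2)) : 0 <= 1 - lam * (1 - alpha) - (1 - alpha)) (ltW D0).
    rewrite /D; nra.
  apply: (fin _ _ _ (alg_iii a b `|derive1 f a| `|derive1 f b| s alpha lam ab s0 (ltac:(by rewrite al0 al1)) (ltac:(by rewrite l0 l1)))).
  rewrite K; apply: (le_trans (ler_normD _ _)); apply: lerD.
    by apply: PL.
  apply: (le_trans (split1 _ c u2 b)); apply: lerD.
    by apply: PL => //; apply: (le_trans cu2 u2b).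
  by apply: PR => //; apply: (le_trans ac cu2).
Qed.
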